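(* Let $\gamma\in\mathbb{R}$ and $|a|$ small. The $L^2_0(\mathbb{T})$-spectrum of $\mathcal H_a(\gamma)$ is symmetric with respect to reflection through the imaginary axis: if $\mu$ is an eigenvalue of $\mathcal H_a(\gamma)$ then so is $-\overline{\mu}$.
   Context: Here $\rho,\phi\in\mathbb{R}$, $k>0$, and $w$, $c$ describe the small-amplitude periodic traveling wave of the Konopelchenko–Dubrovsky equation: $w$ is smooth, real, even and $2\pi$-periodic, $w(z)=a\cos z+a^2(A_0+A_2\cos 2z)+a^3A_3\cos 3z+O(a^4)$, $c=k^2+a^2c_2+O(a^4)$, with $A_0=-\frac{3\rho}{2k^2}$, $A_2=\frac{\rho}{2k^2}$, $A_3=-\frac{\phi^2}{64k^2}+\frac{3\rho^2}{16k^4}$, $c_2=\frac{3\phi^2}{8}+\frac{15\rho^2}{2k^2}$. The operator $\mathcal H_a(\gamma)=ck\partial_z+k^3\partial_z^3+6k\rho\,\partial_z(w\,\cdot)-\tfrac32\phi^2k\,\partial_z(w^2\,\cdot)-\frac{3\gamma^2}{k}\partial_z^{-1}-3i\phi\gamma\, w_z\,\partial_z^{-1}$ acts in $L^2_0(\mathbb{T})$ (mean-zero $2\pi$-periodic square-integrable functions) with domain $H^3(\mathbb{T})\cap L^2_0(\mathbb{T})$. *)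

(* Defs.v *)
From Stdlib Require Import Reals ZArith.
From Coquelicot Require Import Coquelicot.
Open Scope R_scope.

Definition A0 (rho k : R) : R := - (3 * rho) / (2 * k ^ 2).
Definition A2 (rho k : R) : R := rho / (2 * k ^ 2).
Definition A3 (rho phi k : R) : R := - (phi ^ 2) / (64 * k ^ 2) + 3 * rho ^ 2 / (16 * k ^ 4).
Definition c2 (rho phi k : R) : R := 3 * phi ^ 2 / 8 + 15 * rho ^ 2 / (2 * k ^ 2).

(* Fourier coefficient  f^(m) = (1/2pi) int_0^{2pi} f(z) e^{-imz} dz
   of a real 2pi-periodic function f, as a complex number. *)
Definition fcoef (f : R -> R) (m : Z) : C :=
  (/ (2 * PI) * RInt (fun z => f z * cos (IZR m * z)) 0 (2 * PI),
   - (/ (2 * PI) * RInt (fun z => f z * sin (IZR m * z)) 0 (2 * PI))).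

(* Sums over Z (symmetric partial sums; all sums used below are absolutely
   convergent, so this is the usual sum over Z). *)
Definition zsym (f : Z -> C) (n : nat) : C :=
  match n with
  | O => f 0%Z
  | S _ => Cplus (f (Z.of_nat n)) (f (- Z.of_nat n)%Z)
  end.
Definition is_zseries (f : Z -> C) (l : C) : Prop := is_series (zsym f) l.

(* A function u in L^2_0(T) is represented by its Fourier coefficients
   u : Z -> C.  Membership in H^3(T) /\ L^2_0(T): *)
Definition in_H3_L20 (u : Z -> C) : Prop :=
  u 0%Z = RtoC 0 /\
  ex_series (fun n : nat =>
    INR n ^ 6 * (Cmod (u (Z.of_nat n)) ^ 2 + Cmod (u (- Z.of_nat n)%Z) ^ 2)).

(* The Fourier symbol  i n  of d/dz. *)
Definition dsym (n : Z) : C := Cmult Ci (RtoC (IZR n)).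

(* d_z^{-1} on L^2_0: the mean-zero antiderivative. *)
Definition dinv (u : Z -> C) (n : Z) : C :=
  if Z.eqb n 0 then RtoC 0 else Cmult (u n) (Cinv (dsym n)).

(* mu is an eigenvalue of
   H = c k d_z + k^3 d_z^3 + 6 k rho d_z(w .) - 3/2 phi^2 k d_z(w^2 .)
       - (3 gamma^2 / k) d_z^{-1} - 3 i phi gamma w_z d_z^{-1}
   on L^2_0(T) with domain H^3(T) /\ L^2_0(T): there is a nonzero u in the
   domain with H u = mu u (equality of all Fourier coefficients).
   v1, v2, v3 are the Fourier coefficients of w u, w^2 u, w_z d_z^{-1} u
   (discrete convolutions). *)
Definition is_eigenvalue_H (k c rho phi gamma : R) (w : R -> R) (mu : C) : Prop :=
  exists u : Z -> C,
    in_H3_L20 u /\ (exists n, u n <> RtoC 0) /\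
    exists v1 v2 v3 : Z -> C,
      (forall n, is_zseries (fun m => Cmult (fcoef w (n - m)%Z) (u m)) (v1 n)) /\
      (forall n, is_zseries
         (fun m => Cmult (fcoef (fun z => w z ^ 2) (n - m)%Z) (u m)) (v2 n)) /\
      (forall n, is_zseries
         (fun m => Cmult (fcoef (Derive w) (n - m)%Z) (dinv u m)) (v3 n)) /\
      (forall n : Z,
        Cplus (Cmult (RtoC (c * k)) (Cmult (dsym n) (u n)))
       (Cplus (Cmult (RtoC (k ^ 3)) (Cmult (Cmult (dsym n) (Cmult (dsym n) (dsym n))) (u n)))
       (Cplus (Cmult (RtoC (6 * k * rho)) (Cmult (dsym n) (v1 n)))
       (Cplus (Cmult (RtoC (- (3 / 2) * phi ^ 2 * k)) (Cmult (dsym n) (v2 n)))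
       (Cplus (Cmult (RtoC (- (3 * gamma ^ 2 / k))) (dinv u n))
              (Cmult (Cmult (RtoC (- 3 * phi * gamma)) Ci) (v3 n))))))
        = Cmult mu (u n)).

(* Main.v *)
Require Import Defs.
From Stdlib Require Import Reals ZArith Lra.
From Coquelicot Require Import Coquelicot.
Open Scope R_scope.

Lemma conj_cont (l : C) : filterlim Cconj (locally l) (locally (Cconj l)).
Proof.
  apply filterlim_locally. intros eps.
  exists eps. intros [x y] [H1 H2]. destruct l as [a b].
  split; simpl in *. exact H1.
  unfold ball in *; simpl in *. unfold AbsRing_ball in *. unfold abs, minus, plus, opp in *; simpl in *.
  replace (- y + - - b) with (- (y + - b)) by ring. rewrite Rabs_Ropp. exact H2.
Qed.

Lemma sum_n_conj (a : nat -> C) N :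
  sum_n (fun n => Cconj (a n)) N = Cconj (sum_n a N).
Proof.
  induction N.
  - rewrite !sum_O. reflexivity.
  - rewrite !sum_Sn, IHN. change plus with Cplus. rewrite Cplus_conj. reflexivity.
Qed.

Lemma is_series_conj (a : nat -> C) l :
  is_series a l -> is_series (fun n => Cconj (a n)) (Cconj l).
Proof.
  unfold is_series. intros H.
  eapply filterlim_ext. intros N. symmetry. apply sum_n_conj.
  eapply filterlim_comp. exact H. apply conj_cont.
Qed.

Lemma is_zseries_conj (f g : Z -> C) l :
  (forall m, g m = Cconj (f m)) -> is_zseries f l -> is_zseries g (Cconj l).
Proof.
  intros Hg H. unfold is_zseries in *.
  eapply is_series_ext; [| apply (is_series_conj _ _ H)].
  intros n. destruct n; unfold zsym; rewrite ?Hg; try reflexivity.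
  rewrite Cplus_conj. reflexivity.
Qed.

Lemma RInt_antisym_zero (g : R -> R) :
  (forall z, continuous g z) -> (forall y, g (-1*y + 2*PI) = - g y) ->
  RInt g 0 (2*PI) = 0.
Proof.
  intros Hc Hs.
  assert (Hex : ex_RInt g (-1 * 0 + 2 * PI) (-1 * (2*PI) + 2*PI)).
  { apply (ex_RInt_continuous (V:=R_CompleteNormedModule)). intros; apply Hc. }
  pose proof (RInt_comp_lin g (-1) (2*PI) 0 (2*PI) Hex) as H.
  replace (-1 * 0 + 2 * PI) with (2*PI) in H by ring.
  replace (-1 * (2*PI) + 2 * PI) with 0 in H by ring.
  rewrite (RInt_ext _ g) in H.
  2:{ intros x _. rewrite Hs. unfold scal; simpl. unfold mult; simpl. ring. }
  rewrite <- (opp_RInt_swap g 0 (2*PI)) in H.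
  2:{ apply (ex_RInt_continuous (V:=R_CompleteNormedModule)). intros; apply Hc. }
  unfold opp in H; simpl in H. lra.
Qed.

Lemma sin2pi (m : Z) : sin (2 * (IZR m * PI)) = 0.
Proof. apply sin_eq_0_1. exists (2 * m)%Z. rewrite mult_IZR. ring. Qed.
Lemma cos2pi (m : Z) : cos (2 * (IZR m * PI)) = 1.
Proof.
  rewrite cos_2a_sin. rewrite (sin_eq_0_1 (IZR m * PI)). ring. exists m. ring.
Qed.

Lemma sin_refl (m : Z) y : sin (IZR m * (-1 * y + 2 * PI)) = - sin (IZR m * y).
Proof.
  replace (IZR m * (-1 * y + 2 * PI)) with (- (IZR m * y) + 2 * (IZR m * PI)) by ring.
  rewrite sin_plus, sin2pi, cos2pi, sin_neg. ring.
Qed.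
Lemma cos_refl (m : Z) y : cos (IZR m * (-1 * y + 2 * PI)) = cos (IZR m * y).
Proof.
  replace (IZR m * (-1 * y + 2 * PI)) with (- (IZR m * y) + 2 * (IZR m * PI)) by ring.
  rewrite cos_plus, sin2pi, cos2pi, cos_neg. ring.
Qed.

Lemma cont_mult_trig (f : R -> R) (t : R -> R) z :
  ex_derive f z -> (forall x, ex_derive t x) -> continuous (fun z => f z * t z) z.
Proof.
  intros Hf Ht. apply (ex_derive_continuous (K:=R_AbsRing) (V:=R_NormedModule)).
  apply (ex_derive_mult f t z Hf (Ht z)).
Qed.

Lemma fcoef_even (f : R -> R) m :
  (forall z, ex_derive f z) -> (forall z, f (z + 2*PI) = f z) -> (forall z, f (-z) = f z) ->
  Cconj (fcoef f m) = fcoef f m.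
Proof.
  intros Hd Hp He.
  assert (I : RInt (fun z => f z * sin (IZR m * z)) 0 (2*PI) = 0).
  { apply RInt_antisym_zero.
    - intros z. apply cont_mult_trig. apply Hd. intros x. auto_derive. auto.
    - intros y. rewrite sin_refl, Hp. replace (-1*y) with (-y) by ring. rewrite He. ring. }
  unfold fcoef, Cconj. simpl. rewrite I. f_equal. ring.
Qed.

Lemma fcoef_odd (f : R -> R) m :
  (forall z, ex_derive f z) -> (forall z, f (z + 2*PI) = f z) -> (forall z, f (-z) = - f z) ->
  Cconj (fcoef f m) = Copp (fcoef f m).
Proof.
  intros Hd Hp He.
  assert (I : RInt (fun z => f z * cos (IZR m * z)) 0 (2*PI) = 0).
  { apply RInt_antisym_zero.
    - intros z. apply cont_mult_trig. apply Hd. intros x. auto_derive. auto.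
    - intros y. rewrite cos_refl, Hp. replace (-1*y) with (-y) by ring. rewrite He. ring. }
  unfold fcoef, Cconj, Copp. simpl. rewrite I. f_equal; ring.
Qed.

Lemma conj_RtoC r : Cconj (RtoC r) = RtoC r.
Proof. unfold Cconj, RtoC. simpl. f_equal. ring. Qed.
Lemma conj_Ci : Cconj Ci = Copp Ci.
Proof. unfold Cconj, Ci, Copp. simpl. f_equal. ring. Qed.
Lemma conj_dsym n : Cconj (dsym n) = Copp (dsym n).
Proof. unfold Cconj, dsym, Ci, Copp, Cmult, RtoC. simpl. f_equal; ring. Qed.
Lemma conj_inv_dsym n : Cconj (Cinv (dsym n)) = Copp (Cinv (dsym n)).
Proof.
  unfold Cconj, dsym, Ci, Copp, Cmult, Cinv, RtoC. simpl. f_equal.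
  replace (0 * IZR n - 1 * 0) with 0 by ring. unfold Rdiv. ring.
Qed.

Lemma dinv_conj (u : Z -> C) n :
  dinv (fun m => Cconj (u m)) n = Copp (Cconj (dinv u n)).
Proof.
  unfold dinv. destruct (Z.eqb n 0).
  - unfold Cconj, Copp, RtoC. simpl. f_equal; ring.
  - rewrite Cmult_conj, conj_inv_dsym. ring.
Qed.

Lemma alg (r1 r2 r3 r4 r5 r6 : R) (d U V1 V2 DU V3 M : C) :
  Cconj d = Copp d ->
  Cplus (Cmult (RtoC r1) (Cmult d U))
  (Cplus (Cmult (RtoC r2) (Cmult (Cmult d (Cmult d d)) U))
  (Cplus (Cmult (RtoC r3) (Cmult d V1))
  (Cplus (Cmult (RtoC r4) (Cmult d V2))
  (Cplus (Cmult (RtoC r5) DU) (Cmult (Cmult (RtoC r6) Ci) V3))))) = Cmult M U ->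
  Cplus (Cmult (RtoC r1) (Cmult d (Cconj U)))
  (Cplus (Cmult (RtoC r2) (Cmult (Cmult d (Cmult d d)) (Cconj U)))
  (Cplus (Cmult (RtoC r3) (Cmult d (Cconj V1)))
  (Cplus (Cmult (RtoC r4) (Cmult d (Cconj V2)))
  (Cplus (Cmult (RtoC r5) (Copp (Cconj DU))) (Cmult (Cmult (RtoC r6) Ci) (Cconj V3)))))) =
  Cmult (Copp (Cconj M)) (Cconj U).
Proof.
  intros Hd H. apply (f_equal Cconj) in H.
  rewrite !Cplus_conj, !Cmult_conj, !Hd, !conj_RtoC, !conj_Ci in H.
  transitivity (Copp (Cmult (Cconj M) (Cconj U))).
  - rewrite <- H. ring.
  - ring.
Qed.

Theorem lemma2p2 (rho phi k : R) (hk : 0 < k)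
  (w : R -> R -> R) (c : R -> R) (a0 : R) (ha0 : 0 < a0)
  (hsmooth : forall a, Rabs a < a0 -> forall (n : nat) (z : R), ex_derive_n (w a) n z)
  (hper : forall a, Rabs a < a0 -> forall z, w a (z + 2 * PI) = w a z)
  (heven : forall a, Rabs a < a0 -> forall z, w a (- z) = w a z)
  (hw : exists K, forall a z, Rabs a < a0 ->
      Rabs (w a z - (a * cos z + a ^ 2 * (A0 rho k + A2 rho k * cos (2 * z))
                     + a ^ 3 * A3 rho phi k * cos (3 * z))) <= K * Rabs a ^ 4)
  (hc : exists K, forall a, Rabs a < a0 ->
      Rabs (c a - (k ^ 2 + a ^ 2 * c2 rho phi k)) <= K * Rabs a ^ 4) :
  exists a1, 0 < a1 <= a0 /\
    forall (a gamma : R) (mu : C), Rabs a < a1 ->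
      is_eigenvalue_H k (c a) rho phi gamma (w a) mu ->
      is_eigenvalue_H k (c a) rho phi gamma (w a) (Copp (Cconj mu)).
Proof.
  exists a0. split. split; lra.
  intros a gamma mu Ha [u [Hu [[n0 Hn0] [v1 [v2 [v3 [H1 [H2 [H3 Heq]]]]]]]]].
  set (W := w a) in *.
  assert (Wd : forall z, ex_derive W z) by (intro z; exact (hsmooth a Ha 1%nat z)).
  assert (DWd : forall z, ex_derive (Derive W) z) by (intro z; exact (hsmooth a Ha 2%nat z)).
  assert (Wp : forall z, W (z + 2*PI) = W z) by (apply hper; exact Ha).
  assert (We : forall z, W (- z) = W z) by (apply heven; exact Ha).
  assert (DWp : forall z, Derive W (z + 2*PI) = Derive W z).
  { intros z. rewrite <- (Derive_ext (fun x => W (x + 2*PI)) W z (fun x => Wp x)).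
    rewrite (Derive_comp W (fun x => x + 2*PI) z).
    - rewrite Derive_plus, Derive_id, Derive_const. ring.
      apply ex_derive_id. apply ex_derive_const.
    - apply Wd.
    - auto_derive. auto. }
  assert (DWo : forall z, Derive W (- z) = - Derive W z).
  { intros z. rewrite <- (Derive_ext (fun x => W (- x)) W z (fun x => We x)).
    rewrite (Derive_comp W (fun x => - x) z).
    - rewrite Derive_opp, Derive_id. ring.
    - apply Wd.
    - auto_derive. auto. }
  exists (fun n => Cconj (u n)). split.
  { destruct Hu as [Hu0 Hus]. split.
    - rewrite Hu0. apply conj_RtoC.
    - eapply ex_series_ext; [| exact Hus]. intros n. simpl. rewrite !Cmod_conj. reflexivity. }
  split.
  { exists n0. intros E. apply Hn0. rewrite <- (Cconj_conj (u n0)), E. apply conj_RtoC. }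
  exists (fun n => Cconj (v1 n)), (fun n => Cconj (v2 n)), (fun n => Cconj (v3 n)).
  split; [| split; [| split]].
  - intros n. refine (is_zseries_conj _ _ _ _ (H1 n)). intros m. cbv beta.
    rewrite Cmult_conj, fcoef_even; auto.
  - intros n. refine (is_zseries_conj _ _ _ _ (H2 n)). intros m. cbv beta.
    rewrite Cmult_conj, fcoef_even; auto.
    + intros z. apply ex_derive_pow. apply Wd.
    + intros z. simpl. rewrite Wp. reflexivity.
    + intros z. simpl. rewrite We. reflexivity.
  - intros n. refine (is_zseries_conj _ _ _ _ (H3 n)). intros m. cbv beta.
    rewrite Cmult_conj, fcoef_odd, dinv_conj; auto. ring.
  - intros n. rewrite dinv_conj. apply alg. apply conj_dsym. apply Heq.
Qed.
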